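(* In the category of pointed Frölicher spaces, for any basepoint-preserving smooth map $f:X\to Y$ the sequence $X\xrightarrow{f}Y\xrightarrow{l}\mathbf T_f$ is right exact, where $l(y)=[y]$ is the inclusion of $Y$ into the flattened mapping cone; that is, for every pointed Frölicher space $W$ the sequence of pointed sets $[\mathbf T_f,W]\xrightarrow{l^*}[Y,W]\xrightarrow{f^*}[X,W]$ is exact.
   Context: A Frölicher space is a triple $(X,\mathcal C_X,\mathcal F_X)$ with $\mathcal C_X\subseteq X^{\mathbb R}$, $\mathcal F_X\subseteq\mathbb R^X$, such that $\mathcal F_X=\{f\mid f\circ c\in C^\infty(\mathbb R,\mathbb R)\ \forall c\in\mathcal C_X\}$ and $\mathcal C_X=\{c\mid f\circ c\in C^\infty(\mathbb R,\mathbb R)\ \forall f\in\mathcal F_X\}$. Smooth maps: $g\circ\varphi\in\mathcal F_X$ for all $g\in\mathcal F_Y$. Subspaces carry the initial structure, products the structure generated by $f\circ\pi_i$, coproducts, quotients and pushouts the final structure. $I$ is $[0,1]$ with the subspace structure from $\mathbb R$; $\mathbf I$ is $[0,1]$ with the structure generated by those structure functions of $I$ that are constant on $[0,\epsilon)$ and on $(1-\epsilon,1]$ for some $0<\epsilon<1/4$. The flattened mapping cylinder $\mathbf I_f$ is the quotient of $(\mathbf I\times X)\sqcup Y$ by $(1,x)\sim f(x)$, elements $[t,x]$, $[y]$. In the pointed setting (basepoint $x_0\in X$), the flattened mapping cone $\mathbf T_f$ is the quotient of $\mathbf I_f$ collapsing $(\{0\}\times X)\cup(\mathbf I\times\{x_0\})$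 to a point, which is its basepoint. For pointed $X,W$, $[X,W]$ is the set of basepoint-preserving smooth maps modulo pointed smooth homotopy (smooth $H:I\times X\to W$ with $H(t,x_0)=w_0$), pointed by the class of the constant map; $g^*$ is precomposition with $g$; exactness at the middle means $\operatorname{im}l^*=(f^* )^{-1}(\ast)$. *)

(* Defs.v *)
From Stdlib Require Import Reals Lra Relation_Operators.
Open Scope R_scope.

Definition smooth_RR (g : R -> R) : Prop :=
  exists d : nat -> R -> R,
    (forall x, d 0%nat x = g x) /\
    (forall n x, derivable_pt_lim (d n) x (d (S n) x)).

Definition Curves_of {X : Type} (F : (X -> R) -> Prop) : (R -> X) -> Prop :=
  fun c => forall f, F f -> smooth_RR (fun t => f (c t)).
Definition Funs_of {X : Type} (C : (R -> X) -> Prop) : (X -> R) -> Prop :=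
  fun f => forall c, C c -> smooth_RR (fun t => f (c t)).

Record Frol := {
  carrier :> Type;
  curves : (R -> carrier) -> Prop;
  funcs : (carrier -> R) -> Prop;
  funcs_spec : forall f, funcs f <-> Funs_of curves f;
  curves_spec : forall c, curves c <-> Curves_of funcs c }.

Program Definition gen_funcs (X : Type) (F0 : (X -> R) -> Prop) : Frol :=
  {| carrier := X; curves := Curves_of F0; funcs := Funs_of (Curves_of F0) |}.
Next Obligation. tauto. Qed.
Next Obligation.
  split.
  - intros Hc f Hf. exact (Hf c Hc).
  - intros Hc f0 Hf0. apply Hc. intros c' Hc'. exact (Hc' f0 Hf0).
Qed.

Program Definition gen_curves (X : Type) (C0 : (R -> X) -> Prop) : Frol :=
  {| carrier := X; curves := Curves_of (Funs_of C0); funcs := Funs_of C0 |}.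
Next Obligation.
  split.
  - intros Hf c Hc. exact (Hc f Hf).
  - intros Hf c0 Hc0. apply Hf. intros f' Hf'. exact (Hf' c0 Hc0).
Qed.
Next Obligation. tauto. Qed.

Definition smooth {X Y : Frol} (phi : X -> Y) : Prop :=
  forall g, funcs Y g -> funcs X (fun x => g (phi x)).

(** The real line: structure generated by the identity (its curves are the
    C^infinity curves, its functions the C^infinity functions). *)
Definition R_frol : Frol := gen_funcs R (fun g => forall x, g x = x).

Definition subspace (Z : Frol) (P : Z -> Prop) : Frol :=
  gen_funcs {z : Z | P z}
    (fun g => exists h, funcs Z h /\ g = fun s => h (proj1_sig s)).

Definition prodF (A B : Frol) : Frol :=
  gen_funcs (A * B)%type
    (fun g => (exists f, funcs A f /\ g = fun p => f (fst p)) \/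
              (exists f, funcs B f /\ g = fun p => f (snd p))).

Definition coprodF (A B : Frol) : Frol :=
  gen_curves (A + B)%type
    (fun c => (exists c', curves A c' /\ c = fun t => inl (c' t)) \/
              (exists c', curves B c' /\ c = fun t => inr (c' t))).

Definition qrel {Z : Type} (r : Z -> Z -> Prop) := clos_refl_sym_trans Z r.
Definition quot_carrier (Z : Type) (r : Z -> Z -> Prop) : Type :=
  {P : Z -> Prop | exists z, P = qrel r z}.
Definition qproj {Z : Type} (r : Z -> Z -> Prop) (z : Z) : quot_carrier Z r :=
  exist _ (qrel r z) (ex_intro _ z eq_refl).
Definition quotF (Z : Frol) (r : Z -> Z -> Prop) : Frol :=
  gen_curves (quot_carrier Z r)
    (fun c => exists c', curves Z c' /\ c = fun t => qproj r (c' t)).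

Definition I_frol : Frol := subspace R_frol (fun t => 0 <= t <= 1).

Lemma zero_in : 0 <= 0 <= 1. Proof. lra. Qed.
Lemma one_in : 0 <= 1 <= 1. Proof. lra. Qed.
Definition I0 : I_frol := exist _ 0 zero_in.
Definition I1 : I_frol := exist _ 1 one_in.

Definition bI_frol : Frol :=
  gen_funcs I_frol
    (fun g => funcs I_frol g /\
       exists eps, 0 < eps < 1/4 /\
         (forall s t : I_frol, proj1_sig s < eps -> proj1_sig t < eps -> g s = g t) /\
         (forall s t : I_frol, 1 - eps < proj1_sig s -> 1 - eps < proj1_sig t ->
                               g s = g t)).
Definition bI0 : bI_frol := I0.
Definition bI1 : bI_frol := I1.

Record PFrol := { space :> Frol; base : space }.

Definition cyl_rel {X Y : Frol} (f : X -> Y) :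
  coprodF (prodF bI_frol X) Y -> coprodF (prodF bI_frol X) Y -> Prop :=
  fun a b => exists x, a = inl (bI1, x) /\ b = inr (f x).
Definition cylF {X Y : Frol} (f : X -> Y) : Frol :=
  quotF (coprodF (prodF bI_frol X) Y) (cyl_rel f).
Definition cyl_pt {X Y : Frol} (f : X -> Y) (t : bI_frol) (x : X) : cylF f :=
  qproj (cyl_rel f) (inl (t, x)).
Definition cyl_inc {X Y : Frol} (f : X -> Y) (y : Y) : cylF f :=
  qproj (cyl_rel f) (inr y).

(** Flattened mapping cone T_f: collapse ({0} x X) u (bI x {x0}) to a point *)
Definition cone_set {X Y : PFrol} (f : X -> Y) (p : cylF f) : Prop :=
  (exists x, p = cyl_pt f bI0 x) \/ (exists t, p = cyl_pt f t (base X)).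
Definition cone_rel {X Y : PFrol} (f : X -> Y) : cylF f -> cylF f -> Prop :=
  fun p q => cone_set f p /\ cone_set f q.
Definition coneF {X Y : PFrol} (f : X -> Y) : PFrol :=
  {| space := quotF (cylF f) (cone_rel f);
     base := qproj (cone_rel f) (cyl_pt f bI0 (base X)) |}.

Definition cone_inc {X Y : PFrol} (f : X -> Y) (y : Y) : coneF f :=
  qproj (cone_rel f) (cyl_inc f y).

Definition pointed_smooth {X W : PFrol} (g : X -> W) : Prop :=
  smooth g /\ g (base X) = base W.

Definition phomotopic {X W : PFrol} (g g' : X -> W) : Prop :=
  exists H : prodF I_frol X -> W,
    smooth H /\
    (forall x, H (I0, x) = g x) /\
    (forall x, H (I1, x) = g' x) /\
    (forall t, H (t, base X) = base W).

(** Equality of classes in [X,W]: the equivalence relation generated by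
    pointed smooth homotopy. *)
Definition same_class {X W : PFrol} (g g' : X -> W) : Prop :=
  clos_refl_sym_trans (X -> W) phomotopic g g'.

Definition const_map (X W : PFrol) : X -> W := fun _ => base W.

(* Main.v *)
Require Import Defs.
From Stdlib Require Import Reals Relation_Operators.
From Stdlib Require Import Lra Lia.
From Stdlib Require Import Classical ClassicalEpsilon FunctionalExtensionality PropExtensionality ProofIrrelevance.
Open Scope R_scope.

Fixpoint Dn (n : nat) (g : R -> R) : Prop :=
  match n with
  | O => True
  | S m => exists g', (forall x, derivable_pt_lim g x (g' x)) /\ Dn m g'
  end.

Lemma Dn_le n g : Dn (S n) g -> Dn n g.
Proof.
  revert g; induction n as [|n IH]; intros g H; simpl in *; auto.
  destruct H as [g' [Hd Hn]]. exists g'; split; auto.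
Qed.

Lemma smooth_shift g d : (forall x, d 0%nat x = g x) ->
  (forall n x, derivable_pt_lim (d n) x (d (S n) x)) -> smooth_RR (d 1%nat).
Proof. intros _ H. exists (fun n => d (S n)); split; auto. Qed.

Lemma smooth_deriv g : smooth_RR g -> exists g', (forall x, derivable_pt_lim g x (g' x)) /\ smooth_RR g'.
Proof.
  intros [d [H0 H]]. exists (d 1%nat). split.
  - intros x. assert (E : g = d 0%nat) by (extensionality y; auto). rewrite E. apply H.
  - eapply smooth_shift; eauto.
Qed.

Lemma smooth_Dn n : forall g, smooth_RR g -> Dn n g.
Proof.
  induction n as [|n IH]; intros g Hg; simpl; auto.
  destruct (smooth_deriv g Hg) as [g' [H1 H2]]. exists g'; split; auto.
Qed.

Lemma Dn_smooth g : (forall n, Dn n g) -> smooth_RR g.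
Proof.
  set (Q := fun h => forall n, Dn n h).
  assert (step : forall h : {h | Q h}, {h' : {h | Q h} |
            forall x, derivable_pt_lim (proj1_sig h) x (proj1_sig h' x)}).
  { intros [h Hh]. apply constructive_indefinite_description.
    destruct (Hh 1%nat) as [h1 [Hd1 _]].
    assert (Qh1 : Q h1).
    { intros n. destruct (Hh (S n)) as [h2 [Hd2 Hn2]].
      assert (E : h1 = h2).
      { extensionality x. eapply uniqueness_limite; eauto. }
      subst; auto. }
    exists (exist _ h1 Qh1). simpl. auto. }
  intros Hg.
  set (nxt := fun h => proj1_sig (step h)).
  set (d := fun n => proj1_sig (Nat.iter n nxt (exist Q g Hg))).
  exists d. split.
  - intros; reflexivity.
  - intros n x. unfold d. simpl. unfold nxt. apply (proj2_sig (step _)).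
Qed.

Lemma Dn_const n : forall a, Dn n (fun _ => a).
Proof.
  induction n as [|n IH]; intros a; simpl; auto.
  exists (fun _ => 0). split; auto. intros x. apply (derivable_pt_lim_const a x).
Qed.

Lemma Dn_plus_mult n : forall u v, Dn n u -> Dn n v ->
  Dn n (fun x => u x + v x) /\ Dn n (fun x => u x * v x).
Proof.
  induction n as [|n IH]; intros u v Hu Hv; simpl; auto.
  destruct Hu as [u' [Hu1 Hu2]]. destruct Hv as [v' [Hv1 Hv2]].
  pose proof (Dn_le n u) as Hu0. pose proof (Dn_le n v) as Hv0.
  simpl in Hu0, Hv0.
  assert (Hu3 : Dn n u) by (apply Hu0; eauto).
  assert (Hv3 : Dn n v) by (apply Hv0; eauto).
  split.
  - exists (fun x => u' x + v' x). split.
    + intros x. apply (derivable_pt_lim_plus u v x); auto.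
    + apply IH; auto.
  - exists (fun x => u' x * v x + u x * v' x). split.
    + intros x. apply (derivable_pt_lim_mult u v x); auto.
    + apply IH; apply IH; auto.
Qed.

Lemma Dn_plus n u v : Dn n u -> Dn n v -> Dn n (fun x => u x + v x).
Proof. intros; apply Dn_plus_mult; auto. Qed.
Lemma Dn_mult n u v : Dn n u -> Dn n v -> Dn n (fun x => u x * v x).
Proof. intros; apply Dn_plus_mult; auto. Qed.

Lemma Dn_inv n : forall v, (forall x, v x <> 0) -> Dn n v -> Dn n (fun x => / v x).
Proof.
  induction n as [|n IH]; intros v Hnz Hv; simpl; auto.
  destruct Hv as [v' [Hv1 Hv2]].
  assert (Hv3 : Dn n v) by (apply Dn_le; simpl; eauto).
  exists (fun x => (-1 * v' x) * ((/ v x) * (/ v x))). split.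
  - intros x.
    pose proof (derivable_pt_lim_div (fun _ => 1) v x 0 (v' x)
                  (derivable_pt_lim_const 1 x) (Hv1 x) (Hnz x)) as D.
    unfold div_fct in D.
    replace ((-1 * v' x) * ((/ v x) * (/ v x))) with ((0 * v x - v' x * 1) / (v x)²).
    2:{ unfold Rsqr. field. auto. }
    intros eps Heps. destruct (D eps Heps) as [dl Hdl]. exists dl.
    intros h H1 H2. specialize (Hdl h H1 H2).
    replace (/ v (x + h)) with (1 / v (x + h)) by (unfold Rdiv; ring).
    replace (/ v x) with (1 / v x) by (unfold Rdiv; ring). exact Hdl.
  - apply Dn_mult. apply Dn_mult; auto. apply Dn_const.
    apply Dn_mult; apply IH; auto.
Qed.

Lemma Dn_comp n : forall f g, smooth_RR f -> smooth_RR g -> Dn n (fun x => f (g x)).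
Proof.
  induction n as [|n IH]; intros f g Hf Hg; simpl; auto.
  destruct (smooth_deriv f Hf) as [f' [Hf1 Hf2]].
  destruct (smooth_deriv g Hg) as [g' [Hg1 Hg2]].
  exists (fun x => f' (g x) * g' x). split.
  - intros x. apply (derivable_pt_lim_comp g f x); auto.
  - apply Dn_mult. apply IH; auto. apply smooth_Dn; auto.
Qed.

Lemma smooth_const a : smooth_RR (fun _ => a).
Proof. apply Dn_smooth; intros; apply Dn_const. Qed.
Lemma smooth_id : smooth_RR (fun x => x).
Proof.
  exists (fun n => match n with O => fun x => x | S O => fun _ => 1 | _ => fun _ => 0 end).
  split; auto. intros [|[|n]] x; simpl.
  - apply derivable_pt_lim_id.
  - apply (derivable_pt_lim_const 1 x).
  - apply (derivable_pt_lim_const 0 x).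
Qed.
Lemma smooth_plus u v : smooth_RR u -> smooth_RR v -> smooth_RR (fun x => u x + v x).
Proof. intros; apply Dn_smooth; intros; apply Dn_plus; apply smooth_Dn; auto. Qed.
Lemma smooth_mult u v : smooth_RR u -> smooth_RR v -> smooth_RR (fun x => u x * v x).
Proof. intros; apply Dn_smooth; intros; apply Dn_mult; apply smooth_Dn; auto. Qed.
Lemma smooth_inv v : (forall x, v x <> 0) -> smooth_RR v -> smooth_RR (fun x => / v x).
Proof. intros; apply Dn_smooth; intros; apply Dn_inv; auto; apply smooth_Dn; auto. Qed.
Lemma smooth_comp f g : smooth_RR f -> smooth_RR g -> smooth_RR (fun x => f (g x)).
Proof. intros; apply Dn_smooth; intros; apply Dn_comp; auto. Qed.
Lemma smooth_minus u v : smooth_RR u -> smooth_RR v -> smooth_RR (fun x => u x - v x).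
Proof.
  intros Hu Hv.
  assert (E : (fun x => u x - v x) = (fun x => u x + (-1) * v x)) by (extensionality x; ring).
  rewrite E. apply smooth_plus; auto. apply smooth_mult; auto. apply smooth_const.
Qed.
Lemma smooth_ext u v : (forall x, u x = v x) -> smooth_RR u -> smooth_RR v.
Proof. intros H; assert (u = v) by (extensionality x; auto); subst; auto. Qed.

Lemma exp_pow_INR n y : exp (INR n * y) = exp y ^ n.
Proof.
  induction n as [|n IH].
  - simpl. rewrite Rmult_0_l, exp_0; ring.
  - rewrite S_INR, Rmult_plus_distr_r, exp_plus, IH, Rmult_1_l. simpl. ring.
Qed.

Lemma le_exp x : x <= exp x.
Proof.
  destruct (Req_dec x 0) as [->|H]. rewrite exp_0; lra.
  pose proof (exp_ineq1 x H); lra.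
Qed.

Lemma pow_le_exp n u : 0 <= u -> u ^ n <= INR n ^ n * exp u.
Proof.
  intros Hu. destruct n as [|n].
  - simpl. pose proof (exp_ineq1 u). destruct (Req_dec u 0) as [->|H']. rewrite exp_0; lra.
    specialize (H H'); lra.
  - set (N := INR (S n)). assert (HN : 0 < N) by (apply lt_0_INR; lia).
    replace u with (N * (u / N)) at 2 by (field; lra).
    unfold N at 2; rewrite exp_pow_INR.
    replace (u ^ S n) with (N ^ S n * (u / N) ^ S n).
    2:{ rewrite <- Rpow_mult_distr. f_equal. field. lra. }
    apply Rmult_le_compat_l. apply pow_le; lra.
    apply pow_incr. split. unfold Rdiv; apply Rmult_le_pos; [lra| left; apply Rinv_0_lt_compat; lra]. apply le_exp.
Qed.

Definition G (k : nat) (t : R) : R := (/ t) ^ k * exp (- / t).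
Definition F (k : nat) (t : R) : R := if Rlt_dec 0 t then G k t else 0.

Lemma deriv_local f g x l : derivable_pt_lim g x l ->
  (exists d, 0 < d /\ forall y, Rabs (y - x) < d -> f y = g y) -> derivable_pt_lim f x l.
Proof.
  intros Hg [d [Hd Heq]] eps Heps. destruct (Hg eps Heps) as [dl Hdl].
  assert (Hm : 0 < Rmin d dl) by (apply Rmin_pos; auto; apply cond_pos).
  exists (mkposreal _ Hm). intros h H1 H2. simpl in H2.
  rewrite !Heq. apply Hdl; auto. eapply Rlt_le_trans; eauto; apply Rmin_r.
  unfold Rminus; rewrite Rplus_opp_r, Rabs_R0; auto.
  replace (x + h - x) with h by ring. eapply Rlt_le_trans; eauto; apply Rmin_l.
Qed.

Lemma deriv_G k t : t <> 0 ->
  derivable_pt_lim (G k) t (- INR k * G (S k) t + G (S (S k)) t).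
Proof.
  intros Ht.
  assert (Hinv : derivable_pt_lim (fun y => / y) t (- / t ^ 2)).
  { pose proof (derivable_pt_lim_div (fun _ => 1) (fun y => y) t 0 1
                 (derivable_pt_lim_const 1 t) (derivable_pt_lim_id t) Ht) as D.
    replace (- / t ^ 2) with ((0 * t - 1 * 1) / t²) by (unfold Rsqr; field; auto).
    intros eps Heps. destruct (D eps Heps) as [dl Hdl]. exists dl.
    intros h H1 H2. specialize (Hdl h H1 H2). unfold div_fct in Hdl.
    rewrite <- (Rmult_1_l (/ (t + h))), <- (Rmult_1_l (/ t)). exact Hdl. }
  assert (Hp : derivable_pt_lim (fun y => (/ y) ^ k) t (INR k * (/ t) ^ pred k * (- / t ^ 2))).
  { apply (derivable_pt_lim_comp (fun y => / y) (fun y => y ^ k)); auto.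
    apply derivable_pt_lim_pow. }
  assert (He : derivable_pt_lim (fun y => exp (- / y)) t (exp (- / t) * (/ t ^ 2))).
  { apply (derivable_pt_lim_comp (fun y => - / y) exp).
    replace (/ t ^ 2) with (- - / t ^ 2) by ring.
    apply (derivable_pt_lim_opp (fun y => / y)); auto. apply derivable_pt_lim_exp. }
  pose proof (derivable_pt_lim_mult _ _ t _ _ Hp He) as M.
  unfold G. unfold mult_fct in M.
  match goal with |- derivable_pt_lim _ _ ?L => replace L with
     (INR k * (/ t) ^ pred k * - / t ^ 2 * exp (- / t) + (/ t) ^ k * (exp (- / t) * / t ^ 2)) end.
  exact M.
  destruct k as [|k]; simpl; field; auto.
Qed.

Lemma F_pos k t : 0 < t -> F k t = G k t.
Proof. intros H; unfold F; destruct (Rlt_dec 0 t); lra. Qed.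
Lemma F_npos k t : t <= 0 -> F k t = 0.
Proof. intros H; unfold F; destruct (Rlt_dec 0 t); lra. Qed.

Lemma G_bound k h : 0 < h -> 0 <= G (S k) h <= INR (S (S k)) ^ S (S k) * h.
Proof.
  intros Hh. unfold G. set (u := / h). assert (Hu : 0 < u) by (apply Rinv_0_lt_compat; auto).
  pose proof (pow_le_exp (S (S k)) u (Rlt_le _ _ Hu)) as B.
  assert (Hex : 0 < exp u) by apply exp_pos.
  rewrite exp_Ropp. split.
  - apply Rmult_le_pos. apply pow_le; lra. left; apply Rinv_0_lt_compat; auto.
  - replace h with (/ u) by (unfold u; field; lra).
    apply (Rmult_le_reg_r (u * exp u)). apply Rmult_lt_0_compat; auto.
    replace (u ^ S k * / exp u * (u * exp u)) with (u ^ S (S k)) by (simpl; field; lra).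
    replace (INR (S (S k)) ^ S (S k) * / u * (u * exp u)) with (INR (S (S k)) ^ S (S k) * exp u) by (field; lra).
    auto.
Qed.

Lemma deriv_F k t : derivable_pt_lim (F k) t (- INR k * F (S k) t + F (S (S k)) t).
Proof.
  destruct (Rtotal_order t 0) as [Hlt|[Heq|Hgt]].
  - rewrite !F_npos by lra. replace (- INR k * 0 + 0) with 0 by ring.
    apply (deriv_local _ (fun _ => 0)). apply (derivable_pt_lim_const 0 t).
    exists (- t). split. lra. intros y Hy. apply F_npos.
    apply Rabs_def2 in Hy. lra.
  - subst t. rewrite !F_npos by lra. replace (- INR k * 0 + 0) with 0 by ring.
    set (C := INR (S (S k)) ^ S (S k)).
    assert (HC : 0 < C) by (apply pow_lt; apply lt_0_INR; lia).
    intros eps Heps. assert (Hd : 0 < eps / C) by (apply Rdiv_lt_0_compat; auto).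
    exists (mkposreal _ Hd). intros h Hh0 Hh. simpl in Hh.
    rewrite Rplus_0_l, (F_npos k 0) by lra.
    destruct (Rlt_dec 0 h) as [Hp|Hn].
    + rewrite F_pos by auto.
      assert (E : (G k h - 0) / h - 0 = G (S k) h) by (unfold G; simpl; field; lra).
      rewrite E. destruct (G_bound k h Hp) as [B1 B2].
      rewrite Rabs_right by lra. rewrite Rabs_right in Hh by lra.
      apply (Rmult_lt_compat_l C) in Hh; auto.
      replace (C * (eps / C)) with eps in Hh by (field; lra). fold C in B2. lra.
    + rewrite F_npos by lra. replace ((0 - 0) / h - 0) with 0 by (field; auto).
      rewrite Rabs_R0; auto.
  - rewrite !F_pos by lra.
    apply (deriv_local _ (G k)). apply deriv_G; lra.
    exists t. split. lra. intros y Hy. apply F_pos. apply Rabs_def2 in Hy. lra.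
Qed.

Lemma Dn_F n : forall k, Dn n (F k).
Proof.
  induction n as [|n IH]; intros k; simpl; auto.
  exists (fun t => - INR k * F (S k) t + F (S (S k)) t). split.
  - intros; apply deriv_F.
  - apply Dn_plus; auto. apply Dn_mult; auto. apply Dn_const.
Qed.

Lemma smooth_F k : smooth_RR (F k).
Proof. apply Dn_smooth; intros; apply Dn_F. Qed.

Lemma F0_pos t : 0 < t -> 0 < F 0 t.
Proof. intros H; rewrite F_pos by auto; unfold G; simpl; rewrite Rmult_1_l; apply exp_pos. Qed.
Lemma F0_nneg t : 0 <= F 0 t.
Proof. destruct (Rlt_dec 0 t). left; apply F0_pos; auto. rewrite F_npos; lra. Qed.

Definition rho (t : R) : R := F 0 t * / (F 0 t + F 0 (1 - t)).

Lemma rho_den t : 0 < F 0 t + F 0 (1 - t).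
Proof.
  pose proof (F0_nneg t); pose proof (F0_nneg (1 - t)).
  destruct (Rlt_dec 0 t). pose proof (F0_pos t); lra.
  pose proof (F0_pos (1 - t)); lra.
Qed.

Lemma smooth_rho : smooth_RR rho.
Proof.
  unfold rho. apply smooth_mult. apply smooth_F.
  apply smooth_inv. intros x; pose proof (rho_den x); lra.
  apply smooth_plus. apply smooth_F.
  apply (smooth_comp (F 0) (fun t => 1 - t)). apply smooth_F.
  apply smooth_minus. apply smooth_const. apply smooth_id.
Qed.

Lemma rho_0 t : t <= 0 -> rho t = 0.
Proof. intros H; unfold rho; rewrite (F_npos 0 t H); ring. Qed.
Lemma rho_1 t : 1 <= t -> rho t = 1.
Proof.
  intros H; unfold rho. rewrite (F_npos 0 (1 - t)) by lra.
  pose proof (F0_pos t). field. lra.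
Qed.
Lemma rho_range t : 0 <= rho t <= 1.
Proof.
  unfold rho. pose proof (rho_den t). pose proof (F0_nneg t); pose proof (F0_nneg (1 - t)).
  split. apply Rmult_le_pos; auto. left; apply Rinv_0_lt_compat; auto.
  apply (Rmult_le_reg_r (F 0 t + F 0 (1 - t))); auto.
  rewrite Rmult_assoc, Rinv_l by lra. lra.
Qed.

Lemma smooth_affine a b : smooth_RR (fun t => a * t + b).
Proof.
  apply smooth_plus. apply smooth_mult. apply smooth_const. apply smooth_id. apply smooth_const.
Qed.

Lemma sig_eq {T} (P : T -> Prop) (x y : sig P) : proj1_sig x = proj1_sig y -> x = y.
Proof. destruct x, y; simpl; intros; subst; f_equal; apply proof_irrelevance. Qed.

Lemma smooth_of_curves {A B : Frol} (phi : A -> B) :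
  (forall c, curves A c -> curves B (fun t => phi (c t))) -> smooth phi.
Proof.
  intros H g Hg. apply funcs_spec. intros c Hc.
  apply (proj1 (curves_spec B _) (H c Hc)). auto.
Qed.

Lemma curves_of_smooth {A B : Frol} (phi : A -> B) c :
  smooth phi -> curves A c -> curves B (fun t => phi (c t)).
Proof.
  intros Hphi Hc. apply curves_spec. intros g Hg.
  apply (proj1 (funcs_spec A _) (Hphi g Hg)). auto.
Qed.

Lemma curve_func {A : Frol} c f : curves A c -> funcs A f -> smooth_RR (fun t => f (c t)).
Proof. intros Hc Hf. apply (proj1 (funcs_spec A f) Hf). auto. Qed.

Lemma curves_prod (A B : Frol) (c : R -> prodF A B) :
  curves (prodF A B) c <-> curves A (fun t => fst (c t)) /\ curves B (fun t => snd (c t)).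
Proof.
  change (curves (prodF A B) c) with
    (Curves_of (fun g : (A * B)%type -> R => (exists f, funcs A f /\ g = fun p => f (fst p)) \/
              (exists f, funcs B f /\ g = fun p => f (snd p))) c).
  split.
  - intros H. split; apply curves_spec; intros f Hf.
    + apply (H (fun p => f (fst p))). left; eauto.
    + apply (H (fun p => f (snd p))). right; eauto.
  - intros [H1 H2] g [[f [Hf ->]]|[f [Hf ->]]].
    + apply (proj1 (curves_spec A _) H1); auto.
    + apply (proj1 (curves_spec B _) H2); auto.
Qed.

Lemma funcs_R_id : funcs R_frol (fun x => x).
Proof.
  change (Funs_of (Curves_of (fun g : R -> R => forall x, g x = x)) (fun x => x)).
  intros c Hc. apply (Hc (fun x => x)); auto.
Qed.

Lemma curves_R c : curves R_frol c <-> smooth_RR c.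
Proof.
  split.
  - intros H. apply (curve_func c (fun x => x) H funcs_R_id).
  - intros H. change (Curves_of (fun g : R -> R => forall x, g x = x) c).
    intros g Hg. apply (smooth_ext c); auto.
Qed.

Lemma curves_I (g : R -> I_frol) : curves I_frol g <-> smooth_RR (fun t => proj1_sig (g t)).
Proof.
  change (curves I_frol g) with (Curves_of
    (fun h : {z : R_frol | 0 <= z <= 1} -> R => exists h0, funcs R_frol h0 /\ h = fun s => h0 (proj1_sig s)) g).
  split.
  - intros H. apply (H (fun s => proj1_sig s)). exists (fun x => x); split; auto. apply funcs_R_id.
  - intros H h [h0 [Hh0 ->]]. apply (curve_func (fun t => proj1_sig (g t)) h0); auto.
    apply curves_R; auto.
Qed.

Lemma curves_I_bI (g : R -> I_frol) : curves I_frol g -> curves bI_frol g.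
Proof.
  intros H. hnf. intros g0 [Hg0 _]. apply (curve_func g g0 H Hg0).
Qed.

Definition Imap (r : R -> R) (Hr : forall t, 0 <= t <= 1 -> 0 <= r t <= 1) (s : I_frol) : I_frol :=
  exist _ (r (proj1_sig s)) (Hr _ (proj2_sig s)).

Lemma curves_Imap r Hr (g : R -> I_frol) : smooth_RR r -> curves I_frol g ->
  curves I_frol (fun t => Imap r Hr (g t)).
Proof.
  intros Hs H. apply curves_I. simpl. apply (smooth_comp r (fun t => proj1_sig (g t))). exact Hs.
  exact (proj1 (curves_I g) H).
Qed.

Lemma funcs_I_r r : smooth_RR r -> funcs I_frol (fun s : I_frol => r (proj1_sig s)).
Proof.
  intros Hr. apply funcs_spec. intros c Hc.
  apply (smooth_comp r (fun t => proj1_sig (c t))). exact Hr. exact (proj1 (curves_I c) Hc).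
Qed.

Definition sig_r (t : R) : R := rho (4/3 * t - 1/6).
Lemma sig_r_range t : 0 <= t <= 1 -> 0 <= sig_r t <= 1.
Proof. intros; apply rho_range. Qed.
Definition sigI : I_frol -> I_frol := Imap sig_r sig_r_range.
Lemma smooth_sig_r : smooth_RR sig_r.
Proof. unfold sig_r. apply (smooth_comp rho (fun t => 4/3 * t + - (1/6))). apply smooth_rho.
  apply smooth_affine. Qed.

Lemma curves_sigI (g : R -> bI_frol) : curves bI_frol g -> curves I_frol (fun t => sigI (g t)).
Proof.
  intros H. apply curves_I. unfold sigI, Imap; simpl.
  hnf in H.
  apply (H (fun s : I_frol => sig_r (proj1_sig s))). split.
  - apply funcs_I_r, smooth_sig_r.
  - exists (1/8). split. lra. split.
    + intros s t Hs Ht. unfold sig_r. destruct s as [s Hs']; destruct t as [t Ht']; simpl in *.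
      rewrite !rho_0 by lra. auto.
    + intros s t Hs Ht. unfold sig_r. destruct s as [s Hs']; destruct t as [t Ht']; simpl in *.
      rewrite !rho_1 by lra. auto.
Qed.

Lemma sigI_0 : sigI I0 = I0.
Proof. apply sig_eq. simpl. unfold sig_r. apply rho_0. lra. Qed.
Lemma sigI_1 : sigI I1 = I1.
Proof. apply sig_eq. simpl. unfold sig_r. apply rho_1. lra. Qed.

Lemma qrel_sym {Z} (r : Z -> Z -> Prop) a b : qrel r a b -> qrel r b a.
Proof. apply rst_sym. Qed.

Lemma qproj_eq {Z} (r : Z -> Z -> Prop) a b : qrel r a b -> qproj r a = qproj r b.
Proof.
  intros H. apply sig_eq. simpl. extensionality z. apply propositional_extensionality.
  split; intros H'.
  - eapply rst_trans; [apply rst_sym, H| exact H'].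
  - eapply rst_trans; [apply H| exact H'].
Qed.

Lemma curves_qproj (Z : Frol) r c : curves Z c -> curves (quotF Z r) (fun t => qproj r (c t)).
Proof.
  intros H. change (Curves_of (Funs_of (fun c0 => exists c', curves Z c' /\ c0 = fun t => qproj r (c' t)))
       (fun t => qproj r (c t))).
  intros g Hg. apply Hg. eauto.
Qed.

Lemma curves_inl (A B : Frol) c : curves A c -> curves (coprodF A B) (fun t => inl (c t)).
Proof.
  intros H. change (Curves_of (Funs_of (fun c0 => (exists c', curves A c' /\ c0 = fun t => inl (c' t)) \/
              (exists c', curves B c' /\ c0 = fun t => inr (c' t)))) (fun t => @inl A B (c t))).
  intros g Hg. apply Hg. left; eauto.
Qed.

Lemma funcs_quot (Z : Frol) r G : funcs Z (fun z => G (qproj r z)) -> funcs (quotF Z r) G.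
Proof.
  intros H. change (Funs_of (fun c0 => exists c', curves Z c' /\ c0 = fun t => qproj r (c' t)) G).
  intros c [c' [Hc ->]]. apply (curve_func c' _ Hc H).
Qed.

Lemma funcs_coprod (A B : Frol) (G : coprodF A B -> R) :
  funcs A (fun a => G (inl a)) -> funcs B (fun b => G (inr b)) -> funcs (coprodF A B) G.
Proof.
  intros H1 H2. change (Funs_of (fun c0 => (exists c', curves A c' /\ c0 = fun t => inl (c' t)) \/
              (exists c', curves B c' /\ c0 = fun t => inr (c' t))) G).
  intros c [[c' [Hc ->]]|[c' [Hc ->]]].
  - apply (curve_func c' _ Hc H1).
  - apply (curve_func c' _ Hc H2).
Qed.

Definition qlift {Z T : Type} (r : Z -> Z -> Prop) (Fn : Z -> T) (P : quot_carrier Z r) : T :=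
  Fn (proj1_sig (constructive_indefinite_description _ (proj2_sig P))).

Lemma qlift_eq {Z T : Type} (r : Z -> Z -> Prop) (Fn : Z -> T) :
  (forall a b, r a b -> Fn a = Fn b) -> forall z, qlift r Fn (qproj r z) = Fn z.
Proof.
  intros Hr z. unfold qlift.
  destruct (constructive_indefinite_description _ _) as [z' Hz']. simpl in *.
  assert (H : qrel r z z').
  { rewrite Hz'. apply rst_refl. }
  clear Hz'. induction H as [a b Hab|a|a b Hab IH|a b c Hab IH1 Hbc IH2].
  - symmetry; apply Hr; exact Hab.
  - reflexivity.
  - symmetry; exact IH.
  - rewrite IH2; exact IH1.
Qed.

Lemma curves_const (A : Frol) (a : A) : curves A (fun _ => a).
Proof. apply curves_spec. intros g _. apply smooth_const. Qed.

Lemma curves_pair (A B : Frol) (c1 : R -> A) (c2 : R -> B) :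
  curves A c1 -> curves B c2 -> curves (prodF A B) (fun t => (c1 t, c2 t)).
Proof. intros; apply curves_prod; simpl; auto. Qed.

Lemma curves_fst (A B : Frol) (c : R -> prodF A B) : curves (prodF A B) c -> curves A (fun t => fst (c t)).
Proof. intros H; apply curves_prod in H; tauto. Qed.
Lemma curves_snd (A B : Frol) (c : R -> prodF A B) : curves (prodF A B) c -> curves B (fun t => snd (c t)).
Proof. intros H; apply curves_prod in H; tauto. Qed.

Lemma rev_range t : 0 <= t <= 1 -> 0 <= 1 - t <= 1.
Proof. lra. Qed.
Definition revI := Imap (fun t => 1 - t) rev_range.

Lemma ph_sym (X W : PFrol) (g1 g2 : X -> W) : phomotopic g1 g2 -> phomotopic g2 g1.
Proof.
  intros [H [Hs [H0 [H1 Hb]]]].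
  exists (fun p : prodF I_frol X => H (revI (fst p), snd p)). split; [|split; [|split]].
  - apply smooth_of_curves. intros c Hc.
    apply (curves_of_smooth H (fun t => (revI (fst (c t)), snd (c t)))); auto.
    apply curves_pair. apply curves_Imap. apply smooth_minus; [apply smooth_const|apply smooth_id].
    apply (curves_fst _ _ c Hc). apply (curves_snd _ _ c Hc).
  - intros x. change (H (revI I0, x) = g2 x).
    replace (revI I0) with I1 by (apply sig_eq; simpl; ring). auto.
  - intros x. change (H (revI I1, x) = g1 x).
    replace (revI I1) with I0 by (apply sig_eq; simpl; ring). auto.
  - intros t; simpl; auto.
Qed.

Lemma rho_range' (a b : R) t : 0 <= t <= 1 -> 0 <= rho (a * t + b) <= 1.
Proof. intros; apply rho_range. Qed.

Lemma ph_trans (X W : PFrol) (g1 g2 g3 : X -> W) :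
  phomotopic g1 g2 -> phomotopic g2 g3 -> phomotopic g1 g3.
Proof.
  intros [H [Hs [H0 [H1 Hb]]]] [K [Ks [K0 [K1 Kb]]]].
  set (al := Imap (fun t => rho (2 * t + 0)) (rho_range' 2 0)).
  set (be := Imap (fun t => rho (2 * t + -1)) (rho_range' 2 (-1))).
  assert (Sal : smooth_RR (fun t => rho (2 * t + 0))) by
    (apply (smooth_comp rho (fun t => 2 * t + 0)); [apply smooth_rho|apply smooth_affine]).
  assert (Sbe : smooth_RR (fun t => rho (2 * t + -1))) by
    (apply (smooth_comp rho (fun t => 2 * t + -1)); [apply smooth_rho|apply smooth_affine]).
  assert (al1 : forall s : I_frol, 1/2 < proj1_sig s -> al s = I1).
  { intros [s Hs0] Hs'. apply sig_eq. simpl in *. apply rho_1. lra. }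
  assert (be0 : forall s : I_frol, proj1_sig s <= 1/2 -> be s = I0).
  { intros [s Hs0] Hs'. apply sig_eq. simpl in *. apply rho_0. lra. }
  exists (fun p : prodF I_frol X =>
    if Rle_dec (proj1_sig (fst p)) (1/2) then H (al (fst p), snd p) else K (be (fst p), snd p)).
  split; [|split; [|split]].
  - apply smooth_of_curves. intros c Hc. apply curves_spec. intros g Hg.
    set (u := fun t => g (H (al (fst (c t)), snd (c t)))).
    set (v := fun t => g (K (be (fst (c t)), snd (c t)))).
    set (m := fun t => g (H (I1, snd (c t)))).
    assert (Hc1 := curves_fst _ _ c Hc). assert (Hc2 := curves_snd _ _ c Hc).
    assert (Su : smooth_RR u).
    { apply (curve_func (fun t => H (al (fst (c t)), snd (c t))) g); auto.
      apply (curves_of_smooth H (fun t => (al (fst (c t)), snd (c t)))); auto.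
      apply curves_pair; auto. apply curves_Imap; auto. }
    assert (Sv : smooth_RR v).
    { apply (curve_func (fun t => K (be (fst (c t)), snd (c t))) g); auto.
      apply (curves_of_smooth K (fun t => (be (fst (c t)), snd (c t)))); auto.
      apply curves_pair; auto. apply curves_Imap; auto. }
    assert (Sm : smooth_RR m).
    { apply (curve_func (fun t => H (I1, snd (c t))) g); auto.
      apply (curves_of_smooth H (fun t => (I1, snd (c t)))); auto.
      apply curves_pair; auto. apply curves_const. }
    apply (smooth_ext (fun t => u t + v t - m t)).
    2:{ apply smooth_minus; auto. apply smooth_plus; auto. }
    intros t. unfold u, v, m. destruct (Rle_dec (proj1_sig (fst (c t))) (1/2)) as [Hl|Hl].
    + rewrite (be0 _ Hl), K0, <- H1. ring.
    + rewrite (al1 _ (Rnot_le_gt _ _ Hl)). ring.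
  - intros x. simpl. destruct (Rle_dec 0 (1/2)) as [_|Hn]; [|lra].
    replace (al I0) with I0 by (apply sig_eq; simpl; symmetry; apply rho_0; lra). auto.
  - intros x. simpl. destruct (Rle_dec 1 (1/2)) as [Hn|_]; [lra|].
    replace (be I1) with I1 by (apply sig_eq; simpl; symmetry; apply rho_1; lra). auto.
  - intros t. simpl. destruct (Rle_dec _ _); auto.
Qed.

Lemma ph_const (X W : PFrol) : phomotopic (const_map X W) (const_map X W).
Proof.
  exists (fun _ => base W). split; [|split; [|split]]; auto.
  apply smooth_of_curves. intros; apply curves_const.
Qed.

Lemma class_ph (X W : PFrol) (g1 g2 : X -> W) : same_class g1 g2 ->
  g1 = g2 \/ phomotopic g1 g2.
Proof.
  intros Hc. induction Hc as [a b Hab|a|a b _ IH|a b c _ IH1 _ IH2]; auto.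
  - destruct IH as [->|IH]; auto. right; apply ph_sym; auto.
  - destruct IH1 as [->|IH1]; auto. destruct IH2 as [->|IH2]; auto.
    right; eapply ph_trans; eauto.
Qed.

Lemma compose_class (X Y W : PFrol) (f : X -> Y) (Hf : pointed_smooth f) (k1 k2 : Y -> W) :
  same_class k1 k2 -> same_class (fun x => k1 (f x)) (fun x => k2 (f x)).
Proof.
  intros Hc. induction Hc as [a b Hab|a|a b _ IH|a b c _ IH1 _ IH2].
  - apply rst_step. destruct Hab as [H [Hs [H0 [H1 Hb]]]].
    exists (fun p : prodF I_frol X => H (fst p, f (snd p))). split; [|split; [|split]].
    + apply smooth_of_curves. intros c Hc.
      apply (curves_of_smooth H (fun t => (fst (c t), f (snd (c t))))); auto.
      apply curves_pair. apply (curves_fst _ _ c Hc).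
      apply (curves_of_smooth f (fun t => snd (c t))). apply Hf. apply (curves_snd _ _ c Hc).
    + intros x; simpl; auto.
    + intros x; simpl; auto.
    + intros t; simpl. destruct Hf as [_ Hf]. rewrite Hf. auto.
  - apply rst_refl.
  - apply rst_sym; auto.
  - eapply rst_trans; eauto.
Qed.

Theorem lemma6 (X Y : PFrol) (f : X -> Y)
  (Hf : pointed_smooth f) (W : PFrol) (g : Y -> W) (Hg : pointed_smooth g) :
  (exists h : coneF f -> W,
      pointed_smooth h /\ same_class (fun y => h (cone_inc f y)) g)
  <-> same_class (fun x => g (f x)) (const_map X W).
Proof.
  split.
  - intros [h [[hs hb] Hcl]].
    pose proof (compose_class X Y W f Hf _ _ Hcl) as S1. simpl in S1.
    assert (S2 : phomotopic (const_map X W) (fun x => h (cone_inc f (f x)))).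
    { exists (fun p : prodF I_frol X => h (qproj (cone_rel f) (cyl_pt f (fst p : bI_frol) (snd p)))).
      split; [|split; [|split]].
      - apply smooth_of_curves. intros c Hc.
        apply (curves_of_smooth h). exact hs.
        unfold cyl_pt.
        apply (curves_qproj (cylF f) (cone_rel f) (fun t => qproj (cyl_rel f) (inl (fst (c t), snd (c t))))).
        apply (curves_qproj _ (cyl_rel f) (fun t => inl (fst (c t), snd (c t)))).
        apply (curves_inl (prodF bI_frol X) Y (fun t => (fst (c t) : bI_frol, snd (c t)))).
        apply curves_pair. apply curves_I_bI. apply (curves_fst _ _ c Hc). apply (curves_snd _ _ c Hc).
      - intros x. simpl. unfold const_map. rewrite <- hb. f_equal. apply qproj_eq. apply rst_step.
        split; left; eauto.
      - intros x. simpl. unfold cone_inc. f_equal. f_equal. apply qproj_eq. apply rst_step. exists x. split; reflexivity.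
      - intros t. simpl. rewrite <- hb. f_equal. apply qproj_eq. apply rst_step.
        split. right; eauto. left; eauto. }
    eapply rst_trans. apply rst_sym. exact S1. apply rst_sym. apply rst_step. exact S2.
  - intros Hc.
    assert (HK : phomotopic (const_map X W) (fun x => g (f x))).
    { destruct (class_ph X W _ _ Hc) as [E|Hp].
      - rewrite E. apply ph_const.
      - apply ph_sym; auto. }
    destruct HK as [K [Ks [K0 [K1 Kb]]]].
    set (ht := fun z : coprodF (prodF bI_frol X) Y =>
                 match z with inl p => K (sigI (fst p), snd p) | inr y => g y end).
    assert (R1 : forall a b, cyl_rel f a b -> ht a = ht b).
    { intros a b [x [-> ->]]. simpl. change bI1 with I1. rewrite sigI_1. auto. }
    set (h1 := qlift (cyl_rel f) ht).
    assert (Hh1 : forall z, h1 (qproj (cyl_rel f) z) = ht z) by (apply qlift_eq; auto).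
    assert (Cb : forall p, cone_set f p -> h1 p = base W).
    { intros p [[x ->]|[t ->]]; unfold cyl_pt; rewrite Hh1; simpl.
      - change bI0 with I0. rewrite sigI_0. apply K0.
      - apply Kb. }
    assert (R2 : forall a b, cone_rel f a b -> h1 a = h1 b).
    { intros a b [Ha Hb']. rewrite (Cb a Ha), (Cb b Hb'). auto. }
    set (h := qlift (cone_rel f) h1 : coneF f -> W).
    assert (Hh : forall z, h (qproj (cone_rel f) z) = h1 z) by (apply qlift_eq; auto).
    exists h. split; [split|].
    + intros g' Hg'. apply funcs_quot.
      assert (E1 : (fun z => g' (h (qproj (cone_rel f) z))) = (fun z => g' (h1 z))).
      { extensionality z. rewrite Hh. auto. }
      rewrite E1. apply funcs_quot.
      assert (E2 : (fun z => g' (h1 (qproj (cyl_rel f) z))) = (fun z => g' (ht z))).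
      { extensionality z. rewrite Hh1. auto. }
      rewrite E2. apply funcs_coprod.
      * apply funcs_spec. intros c Hc'. simpl.
        apply (curve_func (fun t => K (sigI (fst (c t)), snd (c t))) g'); auto.
        apply (curves_of_smooth K (fun t => (sigI (fst (c t)), snd (c t)))); auto.
        apply curves_pair. apply curves_sigI. apply (curves_fst _ _ c Hc'). apply (curves_snd _ _ c Hc').
      * simpl. apply (proj1 Hg). auto.
    + simpl. rewrite Hh. apply Cb. left; eauto.
    + assert (E : (fun y => h (cone_inc f y)) = g).
      { extensionality y. unfold cone_inc, cyl_inc. rewrite Hh, Hh1. auto. }
      rewrite E. apply rst_refl.
Qed.
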